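(* Consider the discrete system, depending on a time step $h$, $$\frac{\tilde{x}-x}{h} = a x+ \hat{a} \tilde{x} - \big(bxy+c \tilde{x}\tilde{y}+d x\tilde{y} + e \tilde{x}y\big), \qquad \frac{\tilde{y}-y}{h} = - A y -\hat{A}\tilde{y} + \big(Bxy+C \tilde{x}\tilde{y}+D x\tilde{y} + E \tilde{x}y\big),$$ where the constants $a,\hat a,b,c,d,e,A,\hat A,B,C,D,E$ are independent of $h$ and satisfy $$a+\hat{a} = A + \hat{A} = b+c+d+e = B+C+D+E = 1.$$ Such a system is specified by the list $\{a,b,c,d,e,A,B,C,D,E\}$ (with $\hat a=1-a$, $\hat A=1-A$). The system defines a birational map $\varphi:(x,y)\mapsto(\tilde x,\tilde y)$ (i.e. $\tilde x,\tilde y$ are given explicitly and uniquely as rational functions of $x,y$ (and $h$), and $x,y$ are given explicitly and uniquely as rational functions of $\tilde x,\tilde y$ (and $h$), for generic $h$) if and only if the parameters belong to one of the following cases: (i) $\{a,0,0,d,e,A,0,0,D,E\}$ with $d+e=1=D+E$; (ii) $\{a,0,0,1,0,A,B,0,D,E\}$ with $B+D+E=1$; (iii) $\{a,0,0,0,1,A,0,C,D,E\}$ with $C+D+E=1$; (iv) $\{a,b,0,d,e,A,0,0,0,1\}$ with $b+d+e=1$; (v) $\{a,0,c,d,e,A,0,0,1,0\}$ with $c+d+e=1$; (vi) $\{a,0,c,d,0,A,B,0,D,0\}$ with $c+d=1=B+D$; (vii) $\{a,b,0,0,e,A,0,C,0,E\}$ with $b+e=1=C+E$. In each case $a$ and $A$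 are arbitrary.
   Context: The system is a first-order discretization of the Lotka–Volterra system $\dot x = x(1-y)$, $\dot y = y(x-1)$, obtained by replacing $x\to ax+\hat a\tilde x$, $y\to Ay+\hat A\tilde y$, and $xy$ by a linear combination of $xy,\tilde x\tilde y,x\tilde y,\tilde x y$; here $\tilde x,\tilde y$ denote the values of the variables after one time step $h$. *)

(* Defs.v *)
From HB Require Import structures.
From mathcomp Require Import all_boot all_order all_algebra.
From mathcomp Require Import fraction.
Set Implicit Arguments. Unset Strict Implicit. Unset Printing Implicit Defensive.
Import Order.TTheory GRing.Theory Num.Theory.
Local Open Scope ring_scope.

(* Function field K = R(h, x, y) of rational functions in three
   indeterminates over the parameter field R, built as the fraction field of
   the iterated polynomial ring R[y][x][h]. *)
Definition Pol3 (R : realFieldType) := {poly {poly {poly R}}}.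
Definition K3 (R : realFieldType) := {fraction Pol3 R}.

Definition cst (R : realFieldType) (r : R) : K3 R :=
  tofrac (((r%:P)%:P)%:P : Pol3 R).
Definition hvar (R : realFieldType) : K3 R := tofrac ('X : Pol3 R).
Definition xvar (R : realFieldType) : K3 R := tofrac (('X)%:P : Pol3 R).
Definition yvar (R : realFieldType) : K3 R := tofrac ((('X)%:P)%:P : Pol3 R).

Definition LVsys (R : realFieldType) (a b c d e A B C D E : R)
  (h x y xt yt : K3 R) : Prop :=
  (xt - x) / h = cst a * x + cst (1 - a) * xt
     - (cst b * x * y + cst c * xt * yt + cst d * x * yt + cst e * xt * y)
  /\
  (yt - y) / h = - (cst A * y) - cst (1 - A) * yt
     + (cst B * x * y + cst C * xt * yt + cst D * x * yt + cst E * xt * y).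

(* Here the
   generic point (h,x,y) is given by the indeterminates of K3 R. *)
Definition birational_LV (R : realFieldType) (a b c d e A B C D E : R) : Prop :=
  (exists xt yt : K3 R,
     LVsys a b c d e A B C D E (hvar R) (xvar R) (yvar R) xt yt /\
     forall xt' yt' : K3 R,
       LVsys a b c d e A B C D E (hvar R) (xvar R) (yvar R) xt' yt' ->
       xt' = xt /\ yt' = yt)
  /\
  (exists x0 y0 : K3 R,
     LVsys a b c d e A B C D E (hvar R) x0 y0 (xvar R) (yvar R) /\
     forall x0' y0' : K3 R,
       LVsys a b c d e A B C D E (hvar R) x0' y0' (xvar R) (yvar R) ->
       x0' = x0 /\ y0' = y0).

(* Main.v *)
Require Import Defs.
From HB Require Import structures.
From mathcomp Require Import all_boot all_order all_algebra.
From mathcomp Require Import fraction.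
From mathcomp Require Import ring lra.
Import Order.TTheory GRing.Theory Num.Theory.
Local Open Scope ring_scope.

Set Implicit Arguments. Unset Strict Implicit. Unset Printing Implicit Defensive.

Definition BLs (K : fieldType) (al1 P1 Q1 R1 al2 P2 Q2 R2 X Y : K) :=
  al1*X*Y + P1*X + Q1*Y + R1 = 0 /\ al2*X*Y + P2*X + Q2*Y + R2 = 0.
Definition Uq (K : fieldType) (al1 P1 Q1 R1 al2 P2 Q2 R2 : K) :=
  exists X Y, BLs al1 P1 Q1 R1 al2 P2 Q2 R2 X Y /\
   forall X' Y', BLs al1 P1 Q1 R1 al2 P2 Q2 R2 X' Y' -> X' = X /\ Y' = Y.

Lemma L1 (K : fieldType) (al1 P1 Q1 R1 al2 P2 Q2 R2 : K) :
  al1 = 0 -> al2 = 0 -> P1*Q2 - P2*Q1 != 0 -> Uq al1 P1 Q1 R1 al2 P2 Q2 R2.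
Proof.
move=> -> -> Dn; set Dl := P1*Q2 - P2*Q1 in Dn *.
exists ((Q1*R2 - Q2*R1)/Dl), ((P2*R1 - P1*R2)/Dl); split.
  by split; rewrite /Dl; field.
move=> X' Y' [e1 e2]; split.
  apply: (mulIf Dn); rewrite divfK //.
  apply/eqP; rewrite -subr_eq0; apply/eqP.
  have -> : X' * Dl - (Q1 * R2 - Q2 * R1) = Q2 * (0*X'*Y' + P1*X' + Q1*Y' + R1) - Q1 * (0*X'*Y' + P2*X' + Q2*Y' + R2) by rewrite /Dl; ring.
  by rewrite e1 e2; ring.
apply: (mulIf Dn); rewrite divfK //.
apply/eqP; rewrite -subr_eq0; apply/eqP.
have -> : Y' * Dl - (P2 * R1 - P1 * R2) = P1 * (0*X'*Y' + P2*X' + Q2*Y' + R2) - P2 * (0*X'*Y' + P1*X' + Q1*Y' + R1) by rewrite /Dl; ring.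
by rewrite e1 e2; ring.
Qed.

Lemma L2 (K : fieldType) (al1 P1 Q1 R1 al2 P2 Q2 R2 : K) :
  al2 = 0 -> P2 = 0 -> Q2 != 0 -> P1*Q2 - al1*R2 != 0 -> Uq al1 P1 Q1 R1 al2 P2 Q2 R2.
Proof.
move=> -> -> Qn Nn.
have Dn : al1 * (-R2/Q2) + P1 != 0.
  have -> : al1 * (-R2/Q2) + P1 = (P1*Q2 - al1*R2)/Q2 by field.
  by rewrite mulf_neq0 // invr_eq0.
exists (-(Q1*(-R2/Q2) + R1)/(al1 * (-R2/Q2) + P1)), (-R2/Q2); split.
  split; last by rewrite !mul0r !add0r; field.
  apply/eqP; rewrite -subr_eq0; apply/eqP.
  have -> : forall Y, al1 * (- (Q1 * Y + R1) / (al1 * Y + P1)) * Y +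
     P1 * (- (Q1 * Y + R1) / (al1 * Y + P1)) + Q1 * Y + R1 - 0
    = (al1 * Y + P1) * (- (Q1 * Y + R1) / (al1 * Y + P1)) + Q1 * Y + R1 by move=> Y; ring.
  by rewrite [(_ * _ + _) * _]mulrC divfK //; ring.
move=> X' Y' [e1 e2].
have eY : Y' = -R2/Q2.
  apply: (mulIf Qn); rewrite divfK //.
  apply/eqP; rewrite -subr_eq0; apply/eqP.
  by rewrite -e2; ring.
split => //; rewrite -eY in Dn *.
apply: (mulIf Dn); rewrite divfK //.
apply/eqP; rewrite -subr_eq0; apply/eqP.
by rewrite -e1; ring.
Qed.

Lemma L3 (K : fieldType) (al1 P1 Q1 R1 al2 P2 Q2 R2 : K) :
  al1 = 0 -> Q1 = 0 -> P1 != 0 -> Q2*P1 - al2*R1 != 0 -> Uq al1 P1 Q1 R1 al2 P2 Q2 R2.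
Proof.
move=> -> -> Pn Nn.
have Dn : al2 * (-R1/P1) + Q2 != 0.
  have -> : al2 * (-R1/P1) + Q2 = (Q2*P1 - al2*R1)/P1 by field.
  by rewrite mulf_neq0 // invr_eq0.
exists (-R1/P1), (-(P2*(-R1/P1) + R2)/(al2 * (-R1/P1) + Q2)); split.
  split; first by rewrite !mul0r !add0r; field.
  apply/eqP; rewrite -subr_eq0; apply/eqP.
  have -> : forall X, al2 * X * (- (P2 * X + R2) / (al2 * X + Q2)) +
     P2 * X + Q2 * (- (P2 * X + R2) / (al2 * X + Q2)) + R2 - 0
    = (al2 * X + Q2) * (- (P2 * X + R2) / (al2 * X + Q2)) + P2 * X + R2 by move=> X; ring.
  by rewrite [(_ * _ + _) * _]mulrC divfK //; ring.
move=> X' Y' [e1 e2].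
have eX : X' = -R1/P1.
  apply: (mulIf Pn); rewrite divfK //.
  apply/eqP; rewrite -subr_eq0; apply/eqP.
  by rewrite -e1; ring.
split => //; rewrite -eX in Dn *.
apply: (mulIf Dn); rewrite divfK //.
apply/eqP; rewrite -subr_eq0; apply/eqP.
by rewrite -e2; ring.
Qed.

Lemma L4 (K : fieldType) (al1 P1 Q1 R1 al2 P2 Q2 R2 : K) :
  let k2 := P1*al2 - P2*al1 in
  let k1 := P1*Q2 + R1*al2 - P2*Q1 - R2*al1 in
  let k0 := R1*Q2 - R2*Q1 in
  k2 != 0 -> al1*Q2 - al2*Q1 != 0 -> k1*k1 - 4%:R*k0*k2 != 0 ->
  ~ Uq al1 P1 Q1 R1 al2 P2 Q2 R2.
Proof.
move=> k2 k1 k0 k2n Wn dn [X [Y [[e1 e2] U]]].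
pose f t := k2*t*t + k1*t + k0.
have fX : f X = 0.
  have -> : f X = (al2*X+Q2)*(al1*X*Y + P1*X + Q1*Y + R1) - (al1*X+Q1)*(al2*X*Y + P2*X + Q2*Y + R2)
    by rewrite /f /k2 /k1 /k0; ring.
  by rewrite e1 e2; ring.
pose X' := -k1/k2 - X.
have fX' : f X' = 0 by rewrite -fX /f /X'; field.
have XX : X' != X.
  apply/eqP => eXX; move/eqP: dn; apply.
  have h1 : k1 + 2%:R*k2*X = 0.
    have -> : k1 + 2%:R*k2*X = - k2 * (X' - X) by rewrite /X'; field.
    by rewrite eXX subrr mulr0.
  have -> : k1*k1 - 4%:R*k0*k2 = (k1 + 2%:R*k2*X)^+2 - 4%:R*k2*f X by rewrite /f; ring.
  by rewrite h1 fX; ring.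
have [Y' BL'] : exists Y', BLs al1 P1 Q1 R1 al2 P2 Q2 R2 X' Y'.
  have [z|nz] := eqVneq (al1*X'+Q1) 0.
    have nz2 : al2*X'+Q2 != 0.
      apply/eqP => z2; move/eqP: Wn; apply.
      have -> : al1*Q2 - al2*Q1 = al1*(al2*X'+Q2) - al2*(al1*X'+Q1) by ring.
      by rewrite z z2; ring.
    exists (-(P2*X'+R2)/(al2*X'+Q2)); split.
      have -> : al1 * X' * (- (P2 * X' + R2) / (al2 * X' + Q2)) + P1 * X' +
        Q1 * (- (P2 * X' + R2) / (al2 * X' + Q2)) + R1 = f X' / (al2*X'+Q2)
        by rewrite /f /k2 /k1 /k0; field.
      by rewrite fX' mul0r.
    by field.
  exists (-(P1*X'+R1)/(al1*X'+Q1)); split.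
    by field.
  have -> : al2 * X' * (- (P1 * X' + R1) / (al1 * X' + Q1)) + P2 * X' +
     Q2 * (- (P1 * X' + R1) / (al1 * X' + Q1)) + R2 = - f X' / (al1*X'+Q1)
     by rewrite /f /k2 /k1 /k0; field.
  by rewrite fX' oppr0 mul0r.
have [h1 _] := U _ _ BL'.
by rewrite h1 eqxx in XX.
Qed.

Record prm (T : Type) := Prm { pa : T; pb : T; pc : T; pd : T; pe : T;
  pA : T; pB : T; pC : T; pD : T; pE : T; ph : T; px : T; py : T }.
Definition mp (T U : Type) (f : T -> U) (p : prm T) :=
  Prm (f (pa p)) (f (pb p)) (f (pc p)) (f (pd p)) (f (pe p))
      (f (pA p)) (f (pB p)) (f (pC p)) (f (pD p)) (f (pE p))
      (f (ph p)) (f (px p)) (f (py p)).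

Definition al1 (T : comNzRingType) (p : prm T) : T := pc p * ph p.
Definition P1 (T : comNzRingType) (p : prm T) : T := 1 - ph p * (1 - pa p) + ph p * pe p * py p.
Definition Q1 (T : comNzRingType) (p : prm T) : T := ph p * pd p * px p.
Definition R1 (T : comNzRingType) (p : prm T) : T := - px p - ph p * pa p * px p + ph p * pb p * px p * py p.
Definition al2 (T : comNzRingType) (p : prm T) : T := pC p * ph p.
Definition P2 (T : comNzRingType) (p : prm T) : T := ph p * pE p * py p.
Definition Q2 (T : comNzRingType) (p : prm T) : T := -(1 + ph p * (1 - pA p) - ph p * pD p * px p).
Definition R2 (T : comNzRingType) (p : prm T) : T := py p - ph p * pA p * py p + ph p * pB p * px p * py p.
Definition Dl (T : comNzRingType) (p : prm T) : T := (P1 p)*(Q2 p) - (P2 p)*(Q1 p).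
Definition Nb (T : comNzRingType) (p : prm T) : T := (P1 p)*(Q2 p) - (al1 p)*(R2 p).
Definition Nc (T : comNzRingType) (p : prm T) : T := (Q2 p)*(P1 p) - (al2 p)*(R1 p).
Definition k2 (T : comNzRingType) (p : prm T) : T := (P1 p)*(al2 p) - (P2 p)*(al1 p).
Definition k1 (T : comNzRingType) (p : prm T) : T := (P1 p)*(Q2 p) + (R1 p)*(al2 p) - (P2 p)*(Q1 p) - (R2 p)*(al1 p).
Definition k0 (T : comNzRingType) (p : prm T) : T := (R1 p)*(Q2 p) - (R2 p)*(Q1 p).
Definition disc (T : comNzRingType) (p : prm T) : T := (k1 p)*(k1 p) - 4%:R*(k0 p)*(k2 p).
Definition Kc (T : comNzRingType) (p : prm T) : T := pC p * (P1 p) - pc p * pE p * ph p * py p.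
Definition Wc (T : comNzRingType) (p : prm T) : T := pc p * (Q2 p) - pC p * ph p * pd p * px p.

Ltac unf := rewrite /Dl /Nb /Nc /disc /k2 /k1 /k0 /Kc /Wc /al1 /P1 /Q1 /R1 /al2 /P2 /Q2 /R2 /=.
Ltac pushm := rewrite ?(rmorphB, rmorphD, rmorphM, rmorphN, rmorph1, rmorph_nat).

Lemma mDl (T U : comNzRingType) (f : {rmorphism T -> U}) (p : prm T) : Dl (mp f p) = f (Dl p). Proof. by unf; pushm. Qed.
Lemma mNb (T U : comNzRingType) (f : {rmorphism T -> U}) (p : prm T) : Nb (mp f p) = f (Nb p). Proof. by unf; pushm. Qed.
Lemma mNc (T U : comNzRingType) (f : {rmorphism T -> U}) (p : prm T) : Nc (mp f p) = f (Nc p). Proof. by unf; pushm. Qed.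
Lemma mQ2 (T U : comNzRingType) (f : {rmorphism T -> U}) (p : prm T) : Q2 (mp f p) = f (Q2 p). Proof. by unf; pushm. Qed.
Lemma mP1 (T U : comNzRingType) (f : {rmorphism T -> U}) (p : prm T) : P1 (mp f p) = f (P1 p). Proof. by unf; pushm. Qed.
Lemma mdisc (T U : comNzRingType) (f : {rmorphism T -> U}) (p : prm T) : disc (mp f p) = f (disc p). Proof. by unf; pushm. Qed.
Lemma mKc (T U : comNzRingType) (f : {rmorphism T -> U}) (p : prm T) : Kc (mp f p) = f (Kc p). Proof. by unf; pushm. Qed.
Lemma mWc (T U : comNzRingType) (f : {rmorphism T -> U}) (p : prm T) : Wc (mp f p) = f (Wc p). Proof. by unf; pushm. Qed.

Lemma zDl (T : comNzRingType) (p : prm T) (h0 : ph p = 0) : Dl p = -1. Proof. by unf; rewrite h0; ring. Qed.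
Lemma zNb (T : comNzRingType) (p : prm T) (h0 : ph p = 0) : Nb p = -1. Proof. by unf; rewrite h0; ring. Qed.
Lemma zNc (T : comNzRingType) (p : prm T) (h0 : ph p = 0) : Nc p = -1. Proof. by unf; rewrite h0; ring. Qed.
Lemma zQ2 (T : comNzRingType) (p : prm T) (h0 : ph p = 0) : Q2 p = -1. Proof. by unf; rewrite h0; ring. Qed.
Lemma zP1 (T : comNzRingType) (p : prm T) (h0 : ph p = 0) : P1 p = 1. Proof. by unf; rewrite h0; ring. Qed.
Lemma zdisc (T : comNzRingType) (p : prm T) (h0 : ph p = 0) : disc p = 1. Proof. by unf; rewrite h0; ring. Qed.
Lemma zKc (T : comNzRingType) (p : prm T) (h0 : ph p = 0) : Kc p = pC p. Proof. by unf; rewrite h0; ring. Qed.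
Lemma zWc (T : comNzRingType) (p : prm T) (h0 : ph p = 0) : Wc p = - pc p. Proof. by unf; rewrite h0; ring. Qed.

Definition Sys (K : fieldType) (p : prm K) (X Y : K) : Prop :=
  (X - px p)/ph p = pa p * px p + (1 - pa p) * X
     - (pb p * px p * py p + pc p * X * Y + pd p * px p * Y + pe p * X * py p)
  /\
  (Y - py p)/ph p = - (pA p * py p) - (1 - pA p) * Y
     + (pB p * px p * py p + pC p * X * Y + pD p * px p * Y + pE p * X * py p).

Lemma divEq (K : fieldType) (h u v : K) : h != 0 -> (u / h = v) <-> (u - h * v = 0).
Proof.
move=> hn; split=> [<-|/eqP]; first by rewrite mulrC divfK // subrr.
by rewrite subr_eq0 => /eqP ->; field.
Qed.

Lemma opp0P (K : fieldType) (x : K) : (-x = 0) <-> (x = 0).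
Proof. by split=> [/eqP|->]; rewrite ?oppr0 // oppr_eq0 => /eqP. Qed.

Lemma sysBL (K : fieldType) (p : prm K) X Y : ph p != 0 ->
  Sys p X Y <-> BLs (al1 p) (P1 p) (Q1 p) (R1 p) (al2 p) (P2 p) (Q2 p) (R2 p) X Y.
Proof.
move=> hn; rewrite /Sys /BLs !divEq //.
have -> : al1 p * X * Y + P1 p * X + Q1 p * Y + R1 p =
  X - px p - ph p * (pa p * px p + (1 - pa p) * X
     - (pb p * px p * py p + pc p * X * Y + pd p * px p * Y + pe p * X * py p))
  by unf; ring.
have -> : al2 p * X * Y + P2 p * X + Q2 p * Y + R2 p =
  - (Y - py p - ph p * (- (pA p * py p) - (1 - pA p) * Y
     + (pB p * px p * py p + pC p * X * Y + pD p * px p * Y + pE p * X * py p)))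
  by unf; ring.
by rewrite opp0P.
Qed.

Definition Uniq (K : fieldType) (p : prm K) :=
  exists X Y, Sys p X Y /\ forall X' Y', Sys p X' Y' -> X' = X /\ Y' = Y.

Lemma Uniq_ext (T : Type) (S1 S2 : T -> T -> Prop) :
  (forall X Y, S1 X Y <-> S2 X Y) ->
  (exists X Y, S1 X Y /\ forall X' Y', S1 X' Y' -> X' = X /\ Y' = Y) <->
  (exists X Y, S2 X Y /\ forall X' Y', S2 X' Y' -> X' = X /\ Y' = Y).
Proof.
move=> E; split=> [[X [Y [H U]]]|[X [Y [H U]]]]; exists X, Y; split.
- by apply/E.
- by move=> X' Y' /E; apply: U.
- by apply/E.
- by move=> X' Y' /E; apply: U.
Qed.

Lemma main_gen (K : fieldType) (p : prm K) :
 ph p != 0 -> px p != 0 -> py p != 0 ->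
 Dl p != 0 -> Q2 p != 0 -> P1 p != 0 -> Nb p != 0 -> Nc p != 0 -> disc p != 0 ->
 (pC p != 0 -> Kc p != 0) -> (pc p != 0 -> Wc p != 0) ->
 Uniq p <-> (pc p = 0 /\ pC p = 0) \/ (pC p = 0 /\ pE p = 0) \/ (pc p = 0 /\ pd p = 0).
Proof.
move=> hn xn yn Dn Q2n P1n Nbn Ncn dn KcH WcH.
have UU : Uniq p <-> Uq (al1 p) (P1 p) (Q1 p) (R1 p) (al2 p) (P2 p) (Q2 p) (R2 p).
  by apply: Uniq_ext => X Y; apply: sysBL.
rewrite UU; split.
  move=> U.
  have [c0|cn] := eqVneq (pc p) 0; have [C0|Cn] := eqVneq (pC p) 0.
  - by left.
  - have [d0|dn'] := eqVneq (pd p) 0; first by right; right.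
    exfalso; apply: (L4 _ _ _ U).
    + have -> : P1 p * al2 p - P2 p * al1 p = ph p * Kc p by unf; ring.
      by rewrite mulf_neq0 // KcH.
    + have -> : al1 p * Q2 p - al2 p * Q1 p = ph p * Wc p by unf; ring.
      rewrite mulf_neq0 //; unf; rewrite c0 mul0r sub0r oppr_eq0.
      by rewrite !mulf_neq0.
    + by [].
  - have [E0|En] := eqVneq (pE p) 0; first by right; left.
    exfalso; apply: (L4 _ _ _ U).
    + have -> : P1 p * al2 p - P2 p * al1 p = ph p * Kc p by unf; ring.
      rewrite mulf_neq0 //; unf; rewrite C0 mul0r sub0r oppr_eq0.
      by rewrite !mulf_neq0.
    + have -> : al1 p * Q2 p - al2 p * Q1 p = ph p * Wc p by unf; ring.
      by rewrite mulf_neq0 // WcH.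
    + by [].
  - exfalso; apply: (L4 _ _ _ U).
    + have -> : P1 p * al2 p - P2 p * al1 p = ph p * Kc p by unf; ring.
      by rewrite mulf_neq0 // KcH.
    + have -> : al1 p * Q2 p - al2 p * Q1 p = ph p * Wc p by unf; ring.
      by rewrite mulf_neq0 // WcH.
    + by [].
case=> [[c0 C0]|[[C0 E0]|[c0 d0]]].
- by apply: L1 => //; rewrite /al1 /al2 ?c0 ?C0 mul0r.
- by apply: L2 => //; rewrite /al2 /P2 ?E0 ?C0 ?mulr0 ?mul0r.
- by apply: L3 => //; rewrite /al1 /Q1 ?c0 ?d0 ?mulr0 ?mul0r.
Qed.

Definition pcR (R : realFieldType) (r : R) : Pol3 R := ((r%:P)%:P)%:P.

Lemma nzt (R : realFieldType) (q : Pol3 R) : q.[0] != 0 -> tofrac q != 0.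
Proof. by rewrite tofrac_eq0; apply: contra => /eqP ->; rewrite horner0. Qed.

Lemma cst0P (R : realFieldType) (r : R) : tofrac (pcR r) = 0 <-> r = 0.
Proof.
split=> [/eqP|->]; last by rewrite /pcR !polyC0 tofrac0.
by rewrite tofrac_eq0 /pcR !polyC_eq0 => /eqP.
Qed.

Lemma main_K3 (R : realFieldType) (P : prm (Pol3 R)) (rc rC rE rd : R) :
  (ph P).[0] = 0 -> ph P != 0 -> px P = 'X%:P -> py P = 'X%:P%:P ->
  pc P = pcR rc -> pC P = pcR rC -> pE P = pcR rE -> pd P = pcR rd ->
  Uniq (mp (@tofrac _) P) <-> (rc = 0 /\ rC = 0) \/ (rC = 0 /\ rE = 0) \/ (rc = 0 /\ rd = 0).
Proof.
move=> h0 hn ex ey ec eC eE ed.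
have ev0 : ph (mp (horner_eval 0) P) = 0 by [].
rewrite main_gen /=.
- by rewrite ec eC eE ed !cst0P.
- by rewrite tofrac_eq0.
- by rewrite ex tofrac_eq0 polyC_eq0 polyX_eq0.
- by rewrite ey tofrac_eq0 !polyC_eq0 polyX_eq0.
- rewrite mDl; apply: nzt; rewrite -horner_evalE -mDl zDl //.
  by rewrite oppr_eq0 oner_eq0.
- rewrite mQ2; apply: nzt; rewrite -horner_evalE -mQ2 zQ2 //.
  by rewrite oppr_eq0 oner_eq0.
- rewrite mP1; apply: nzt; rewrite -horner_evalE -mP1 zP1 //.
  by rewrite oner_eq0.
- rewrite mNb; apply: nzt; rewrite -horner_evalE -mNb zNb //.
  by rewrite oppr_eq0 oner_eq0.
- rewrite mNc; apply: nzt; rewrite -horner_evalE -mNc zNc //.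
  by rewrite oppr_eq0 oner_eq0.
- rewrite mdisc; apply: nzt; rewrite -horner_evalE -mdisc zdisc //.
  by rewrite oner_eq0.
- rewrite /= eC => Cn; rewrite mKc; apply: nzt; rewrite -horner_evalE -mKc zKc //=.
  rewrite eC horner_evalE /pcR hornerC !polyC_eq0.
  by apply: contra Cn => /eqP->; rewrite /pcR !polyC0 tofrac0.
- rewrite /= ec => cn; rewrite mWc; apply: nzt; rewrite -horner_evalE -mWc zWc //=.
  rewrite oppr_eq0 ec horner_evalE /pcR hornerC !polyC_eq0.
  by apply: contra cn => /eqP->; rewrite /pcR !polyC0 tofrac0.
Qed.

Definition PfP (R : realFieldType) (a b c d e A B C D E : R) : prm (Pol3 R) :=
  Prm (pcR a) (pcR b) (pcR c) (pcR d) (pcR e) (pcR A) (pcR B) (pcR C) (pcR D) (pcR E)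
      'X ('X%:P) ('X%:P%:P).
Definition PbP (R : realFieldType) (a b c d e A B C D E : R) : prm (Pol3 R) :=
  Prm (pcR (1-a)) (pcR c) (pcR b) (pcR e) (pcR d) (pcR (1-A)) (pcR C) (pcR B) (pcR E) (pcR D)
      (-'X) ('X%:P) ('X%:P%:P).

Lemma hvar_neq0 (R : realFieldType) : hvar R != 0.
Proof. by rewrite /hvar tofrac_eq0 polyX_eq0. Qed.

Lemma pc1B (R : realFieldType) (r : R) : (((1 - r)%:P)%:P)%:P = 1 - (((r%:P)%:P)%:P : {poly {poly {poly R}}}).
Proof. by rewrite !polyCB !polyC1. Qed.
Lemma cst1B (R : realFieldType) (r : R) : cst (1 - r) = 1 - cst r.
Proof. by rewrite /cst pc1B tofracB; congr (_ - _); exact: tofrac1. Qed.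

Lemma fwdE (R : realFieldType) (a b c d e A B C D E : R) X Y :
  LVsys a b c d e A B C D E (hvar R) (xvar R) (yvar R) X Y <->
  Sys (mp (@tofrac _) (PfP a b c d e A B C D E)) X Y.
Proof. rewrite /LVsys !cst1B; exact: iff_refl. Qed.

Lemma eq0_via (K : fieldType) (u v : K) : u = 0 -> v = -u -> v = 0.
Proof. by move=> -> ->; rewrite oppr0. Qed.

Lemma bwd_gen (K : fieldType) (a b c d e A B C D E h x0 y0 X Y : K) : h != 0 ->
  ((X - x0) / h = a * x0 + (1 - a) * X
     - (b * x0 * y0 + c * X * Y + d * x0 * Y + e * X * y0)
  /\ (Y - y0) / h = - (A * y0) - (1 - A) * Y
     + (B * x0 * y0 + C * X * Y + D * x0 * Y + E * X * y0)) <->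
  Sys (Prm (1-a) c b e d (1-A) C B E D (-h) X Y) x0 y0.
Proof.
move=> hn; rewrite /Sys /= !divEq ?oppr_eq0 //.
split=> -[h1 h2]; split.
- by apply/eqP; rewrite -oppr_eq0; apply/eqP; rewrite -h1; ring.
- by apply/eqP; rewrite -oppr_eq0; apply/eqP; rewrite -h2; ring.
- by apply/eqP; rewrite -oppr_eq0; apply/eqP; rewrite -h1; ring.
- by apply/eqP; rewrite -oppr_eq0; apply/eqP; rewrite -h2; ring.
Qed.

Lemma PbE (R : realFieldType) (a b c d e A B C D E : R) :
  mp (@tofrac _) (PbP a b c d e A B C D E) =
  Prm (1 - cst a) (cst c) (cst b) (cst e) (cst d) (1 - cst A) (cst C) (cst B) (cst E) (cst D)
    (- hvar R) (xvar R) (yvar R).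
Proof.
rewrite /=; congr Prm; try reflexivity; try exact: cst1B; exact: tofracN.
Qed.

Lemma bwdE (R : realFieldType) (a b c d e A B C D E : R) X Y :
  LVsys a b c d e A B C D E (hvar R) X Y (xvar R) (yvar R) <->
  Sys (mp (@tofrac _) (PbP a b c d e A B C D E)) X Y.
Proof.
rewrite PbE /LVsys !cst1B; exact: (@bwd_gen _ _ _ _ _ _ _ _ _ _ _ _ _ _ _ _ (hvar_neq0 R)).
Qed.

Lemma birE (R : realFieldType) (a b c d e A B C D E : R) :
  birational_LV a b c d e A B C D E <->
  Uniq (mp (@tofrac _) (PfP a b c d e A B C D E)) /\
  Uniq (mp (@tofrac _) (PbP a b c d e A B C D E)).
Proof.
have [f1 f2] := @Uniq_ext _ (fun X Y => LVsys a b c d e A B C D E (hvar R) (xvar R) (yvar R) X Y) (fun X Y => Sys (mp (@tofrac _) (PfP a b c d e A B C D E)) X Y) (fwdE a b c d e A B C D E).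
have [g1 g2] := @Uniq_ext _ (fun X Y => LVsys a b c d e A B C D E (hvar R) X Y (xvar R) (yvar R)) (fun X Y => Sys (mp (@tofrac _) (PbP a b c d e A B C D E)) X Y) (bwdE a b c d e A B C D E).
split => [[H1 H2]|[H1 H2]].
  by split; [exact: (f1 H1) | exact: (g1 H2)].
by split; [exact: (f2 H1) | exact: (g2 H2)].
Qed.

Lemma hX0 (R : realFieldType) : ('X : Pol3 R).[0] = 0.
Proof. exact: hornerX. Qed.
Lemma hNX0 (R : realFieldType) : (- 'X : Pol3 R).[0] = 0.
Proof. by rewrite hornerN hornerX oppr0. Qed.
Lemma hNXn (R : realFieldType) : (- 'X : Pol3 R) != 0.
Proof. by rewrite oppr_eq0 polyX_eq0. Qed.

Unset Implicit Arguments.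

Theorem theorem1 (R : realFieldType) (a b c d e A B C D E : R)
  (hsum1 : b + c + d + e = 1) (hsum2 : B + C + D + E = 1) :
  birational_LV a b c d e A B C D E <->
     (* (i) *)   (b = 0 /\ c = 0 /\ B = 0 /\ C = 0 /\ d + e = 1 /\ D + E = 1)
  \/ (* (ii) *)  (b = 0 /\ c = 0 /\ d = 1 /\ e = 0 /\ C = 0 /\ B + D + E = 1)
  \/ (* (iii) *) (b = 0 /\ c = 0 /\ d = 0 /\ e = 1 /\ B = 0 /\ C + D + E = 1)
  \/ (* (iv) *)  (c = 0 /\ B = 0 /\ C = 0 /\ D = 0 /\ E = 1 /\ b + d + e = 1)
  \/ (* (v) *)   (b = 0 /\ B = 0 /\ C = 0 /\ D = 1 /\ E = 0 /\ c + d + e = 1)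
  \/ (* (vi) *)  (b = 0 /\ e = 0 /\ C = 0 /\ E = 0 /\ c + d = 1 /\ B + D = 1)
  \/ (* (vii) *) (c = 0 /\ d = 0 /\ B = 0 /\ D = 0 /\ b + e = 1 /\ C + E = 1).
Proof.
rewrite birE.
rewrite (@main_K3 R (PfP a b c d e A B C D E) c C E d (hX0 R) (negbT (polyX_eq0 _)) erefl erefl erefl erefl erefl erefl).
rewrite (@main_K3 R (PbP a b c d e A B C D E) b B D e (hNX0 R) (hNXn R) erefl erefl erefl erefl erefl erefl).
  split.
  + case=> [[[c0 C0]|[[C0 E0]|[c0 d0]]] [[b0 B0]|[[B0 D0]|[b0 e0]]]].
    * left; do !split => //; lra.
    * right; right; right; left; do !split => //; lra.
    * right; left; do !split => //; lra.
    * right; right; right; right; left; do !split => //; lra.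
    * exfalso; lra.
    * right; right; right; right; right; left; do !split => //; lra.
    * right; right; left; do !split => //; lra.
    * right; right; right; right; right; right; do !split => //; lra.
    * exfalso; lra.
  + case=> [[b0 [c0 [B0 [C0 _]]]]|[[b0 [c0 [d1 [e0 [C0 _]]]]]|[[b0 [c0 [d0 [e1 [B0 _]]]]]|[[c0 [B0 [C0 [D0 _]]]]|[[b0 [B0 [C0 [D1 [E0 _]]]]]|[[b0 [e0 [C0 [E0 _]]]]|[c0 [d0 [B0 [D0 _]]]]]]]]]].
    * by split; left.
    * by split; [left|right; right].
    * by split; [right; right|left].
    * by split; [left|right; left].
    * by split; [right; left|left].
    * by split; [right; left|right; right].
    * by split; [right; right|right; left].
Qed.
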